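(* Let $\mathcal A\in\mathbb C^{n_1\times n_2\times n_3}$, $\mathcal A^-\in\mathcal A\{1\}$ and $\mathcal X\in\mathbb C^{n_2\times n_1\times n_3}$. The following are equivalent: (a) $\mathcal X=\mathcal A^-\mathcal A\mathcal A^*$; (b) $\mathcal X(\mathcal A^\dagger)^*\mathcal X=\mathcal X$, $(\mathcal A^\dagger)^*\mathcal X(\mathcal A^\dagger)^*=(\mathcal A^\dagger)^*$, $\mathcal A\mathcal X=\mathcal A\mathcal A^*$ and $\mathcal X(\mathcal A^\dagger)^*=\mathcal A^-\mathcal A$; (c) $\mathcal X(\mathcal A^\dagger)^*\mathcal X=\mathcal X$, $(\mathcal A^\dagger)^*\mathcal X(\mathcal A^\dagger)^*=(\mathcal A^\dagger)^*$, $(\mathcal A^\dagger)^*\mathcal X=\mathcal A\mathcal A^\dagger$ and $\mathcal X(\mathcal A^\dagger)^*=\mathcal A^-\mathcal A$; (d) $\mathcal X(\mathcal A^\dagger)^*\mathcal X=\mathcal X$, $(\mathcal A^\dagger)^*\mathcal X=\mathcal A\mathcal A^\dagger$ and $\mathcal X(\mathcal A^\dagger)^*=\mathcal A^-\mathcal A$; (e) $\mathcal A^-\mathcal A\mathcal X=\mathcal X$ and $\mathcal A\mathcal X=\mathcal A\mathcal A^*$.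
   Context: Fix a nonsingular matrix $M\in\mathbb C^{n_3\times n_3}$. For $\mathcal C\in\mathbb C^{n_1\times n_2\times n_3}$ let $\widehat{\mathcal C}=\mathcal C\times_3M$, i.e. $\widehat{\mathcal C}_{ijk}=\sum_{l=1}^{n_3}M_{kl}\mathcal C_{ijl}$, and let $\widehat{\mathcal C}^{(i)}$ denote its $i$-th frontal slice. The M-product $\mathcal C\star_M\mathcal D$ of $\mathcal C\in\mathbb C^{n_1\times n_2\times n_3}$ and $\mathcal D\in\mathbb C^{n_2\times l\times n_3}$ is the unique tensor with $\widehat{\mathcal C\star_M\mathcal D}^{(i)}=\widehat{\mathcal C}^{(i)}\widehat{\mathcal D}^{(i)}$ for all $i\in[n_3]$. Juxtaposition of tensors denotes the M-product. The conjugate transpose $\mathcal A^*$ is defined by $\widehat{\mathcal A^*}^{(i)}=(\widehat{\mathcal A}^{(i)})^*$. The Moore–Penrose inverse $\mathcal A^\dagger$ is the unique $\mathcal W$ satisfying $\mathcal A\mathcal W\mathcal A=\mathcal A$, $\mathcal W\mathcal A\mathcal W=\mathcal W$, $(\mathcal A\mathcal W)^*=\mathcal A\mathcal W$, $(\mathcal W\mathcal A)^*=\mathcal W\mathcal A$. $\mathcal A\{1\}$ is the set of all $\mathcal W$ with $\mathcal A\mathcal W\mathcal A=\mathcal A$. *)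

(* Defs.v *)
From HB Require Import structures.
From mathcomp Require Import all_boot all_algebra.
From mathcomp Require Import complex Rstruct.
Set Implicit Arguments. Unset Strict Implicit. Unset Printing Implicit Defensive.
Import GRing.Theory Num.Theory.
Local Open Scope ring_scope.

Definition C : numClosedFieldType := complex Rdefinitions.R.

(* A tensor in C^{n1 x n2 x n3}, given by its frontal slices: (A k) i j = A_{ijk}. *)
Definition tensor (n1 n2 n3 : nat) := {ffun 'I_n3 -> 'M[C]_(n1, n2)}.

Definition mode3 {n1 n2 n3 : nat} (M : 'M[C]_n3) (A : tensor n1 n2 n3)
  : tensor n1 n2 n3 := [ffun k => \sum_l M k l *: A l].

Definition ctrmx {m n : nat} (B : 'M[C]_(m, n)) : 'M[C]_(n, m) :=
  map_mx Num.conj (B^T).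

(* M-product: the unique tensor whose transformed slices are the products of
   the transformed slices (M nonsingular, so the inverse transform is invmx M). *)
Definition mprod {n1 n2 l n3 : nat} (M : 'M[C]_n3)
  (A : tensor n1 n2 n3) (B : tensor n2 l n3) : tensor n1 l n3 :=
  mode3 (invmx M) [ffun k => mode3 M A k *m mode3 M B k].

Definition mctr {n1 n2 n3 : nat} (M : 'M[C]_n3) (A : tensor n1 n2 n3)
  : tensor n2 n1 n3 :=
  mode3 (invmx M) [ffun k => ctrmx (mode3 M A k)].

Definition is_mpinv {n1 n2 n3 : nat} (M : 'M[C]_n3)
  (A : tensor n1 n2 n3) (W : tensor n2 n1 n3) : Prop :=
  [/\ mprod M (mprod M A W) A = A,
      mprod M (mprod M W A) W = W,
      mctr M (mprod M A W) = mprod M A W &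
      mctr M (mprod M W A) = mprod M W A].

Definition is_inner_inv {n1 n2 n3 : nat} (M : 'M[C]_n3)
  (A : tensor n1 n2 n3) (W : tensor n2 n1 n3) : Prop :=
  mprod M (mprod M A W) A = A.

(* Main.v *)
Require Import Defs.
From HB Require Import structures.
From mathcomp Require Import all_boot all_algebra.
From mathcomp Require Import complex Rstruct.
Set Implicit Arguments. Unset Strict Implicit. Unset Printing Implicit Defensive.
Import GRing.Theory Num.Theory.
Local Open Scope ring_scope.

Lemma mode3_comp n1 n2 n3 (N M : 'M[C]_n3) (A : tensor n1 n2 n3) :
  mode3 N (mode3 M A) = mode3 (N *m M) A.
Proof.
apply/ffunP=> k; rewrite !ffunE.
under eq_bigr => l _ do rewrite ffunE scaler_sumr.
rewrite exchange_big /=; apply: eq_bigr => j _.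
rewrite mxE scaler_suml; apply: eq_bigr => l _; by rewrite scalerA.
Qed.

Lemma mode3_1 n1 n2 n3 (A : tensor n1 n2 n3) : mode3 1%:M A = A.
Proof.
apply/ffunP=> k; rewrite ffunE (bigD1 k) //= big1 ?addr0.
  by rewrite mxE eqxx scale1r.
by move=> l /negbTE nl; rewrite mxE eq_sym nl scale0r.
Qed.

Section T.
Variables (n3 : nat) (M : 'M[C]_n3) (HM : M \in unitmx).

Lemma hat_inv n1 n2 (A : tensor n1 n2 n3) : mode3 M (mode3 (invmx M) A) = A.
Proof. by rewrite mode3_comp mulmxV // mode3_1. Qed.

Lemma inv_hat n1 n2 (A : tensor n1 n2 n3) : mode3 (invmx M) (mode3 M A) = A.
Proof. by rewrite mode3_comp mulVmx // mode3_1. Qed.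

Lemma hat_mprod n1 n2 l (A : tensor n1 n2 n3) (B : tensor n2 l n3) k :
  mode3 M (mprod M A B) k = mode3 M A k *m mode3 M B k.
Proof. by rewrite /mprod hat_inv ffunE. Qed.

Lemma hat_mctr n1 n2 (A : tensor n1 n2 n3) k :
  mode3 M (mctr M A) k = ctrmx (mode3 M A k).
Proof. by rewrite /mctr hat_inv ffunE. Qed.

Lemma hat_inj n1 n2 (A B : tensor n1 n2 n3) :
  (forall k, mode3 M A k = mode3 M B k) -> A = B.
Proof. move=> h; rewrite -(inv_hat A) -(inv_hat B); congr mode3; exact/ffunP. Qed.

Lemma ctrmxM m n p (A : 'M[C]_(m, n)) (B : 'M[C]_(n, p)) :
  ctrmx (A *m B) = ctrmx B *m ctrmx A.
Proof. by rewrite /ctrmx trmx_mul map_mxM. Qed.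

Lemma ctrmxK m n (A : 'M[C]_(m, n)) : ctrmx (ctrmx A) = A.
Proof.
apply/matrixP=> i j; by rewrite /ctrmx !mxE conjCK.
Qed.

Lemma mprodA n1 n2 n4 n5 (A : tensor n1 n2 n3) (B : tensor n2 n4 n3)
  (D : tensor n4 n5 n3) : mprod M (mprod M A B) D = mprod M A (mprod M B D).
Proof. apply: hat_inj => k; by rewrite !hat_mprod mulmxA. Qed.

Lemma mctrM n1 n2 n4 (A : tensor n1 n2 n3) (B : tensor n2 n4 n3) :
  mctr M (mprod M A B) = mprod M (mctr M B) (mctr M A).
Proof. apply: hat_inj => k; by rewrite !(hat_mprod, hat_mctr) ctrmxM. Qed.

Lemma mctrK n1 n2 (A : tensor n1 n2 n3) : mctr M (mctr M A) = A.
Proof. apply: hat_inj => k; by rewrite !hat_mctr ctrmxK. Qed.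
End T.

Unset Implicit Arguments.
Set Strict Implicit.
Theorem theorem3p11 (n1 n2 n3 : nat) (M : 'M[C]_n3) (HM : M \in unitmx)
  (A : tensor n1 n2 n3) (Am : tensor n2 n1 n3) (Ad : tensor n2 n1 n3)
  (X : tensor n2 n1 n3)
  (HAm : is_inner_inv M A Am) (HAd : is_mpinv M A Ad) :
  let P := mctr M Ad in
  [<->
   (* (a) *) X = mprod M (mprod M Am A) (mctr M A);
   (* (b) *) mprod M (mprod M X P) X = X /\ mprod M (mprod M P X) P = P /\
             mprod M A X = mprod M A (mctr M A) /\ mprod M X P = mprod M Am A;
   (* (c) *) mprod M (mprod M X P) X = X /\ mprod M (mprod M P X) P = P /\
             mprod M P X = mprod M A Ad /\ mprod M X P = mprod M Am A;
   (* (d) *) mprod M (mprod M X P) X = X /\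
             mprod M P X = mprod M A Ad /\ mprod M X P = mprod M Am A;
   (* (e) *) mprod M (mprod M Am A) X = X /\ mprod M A X = mprod M A (mctr M A)].
Proof.
move=> P; rewrite /is_inner_inv in HAm.
have mA := mprodA HM; have cM := mctrM HM; have cK := mctrK HM.
case: HAd => [H1 H2 H3 H4].
have K1 : mprod M (mctr M A) P = mprod M Ad A by rewrite /P -cM H4.
have K2 : mprod M P (mctr M A) = mprod M A Ad by rewrite /P -cM H3.
have K3 : P = mprod M P (mprod M Ad A).
  by rewrite {1}/P -{1}H2 cM H4.
have K4 : mprod M (mctr M A) (mprod M A Ad) = mctr M A.
  by rewrite -H3 -cM H1.
have HAm0 : mprod M A (mprod M Am A) = A by rewrite -mA.
have HAmt : forall p (D : tensor n2 p n3),
    mprod M A (mprod M Am (mprod M A D)) = mprod M A D.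
  by move=> p D; rewrite -(mA _ _ _ _ Am A) -mA HAm0.
have H1r : mprod M A (mprod M Ad A) = A by rewrite -mA.
have K5 : mprod M P (mprod M Am A) = P.
  by rewrite {1}K3 !mA HAm0 -K3.
have K5t : forall p (D : tensor n2 p n3),
    mprod M P (mprod M Am (mprod M A D)) = mprod M P D.
  by move=> p D; rewrite -(mA _ _ _ _ Am A) -mA K5.
have ae : X = mprod M (mprod M Am A) (mctr M A) ->
   mprod M (mprod M Am A) X = X /\ mprod M A X = mprod M A (mctr M A).
  by move=> ->; split; rewrite !mA HAmt.
have ea : mprod M (mprod M Am A) X = X /\ mprod M A X = mprod M A (mctr M A) ->
   X = mprod M (mprod M Am A) (mctr M A).
  by case=> e1 e2; rewrite -e1 !mA e2.
have aXP : X = mprod M (mprod M Am A) (mctr M A) -> mprod M X P = mprod M Am A.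
  by move=> ->; rewrite !mA K1 H1r.
have aPX : X = mprod M (mprod M Am A) (mctr M A) -> mprod M P X = mprod M A Ad.
  by move=> ->; rewrite !mA K5t K2.
have aXPX : X = mprod M (mprod M Am A) (mctr M A) -> mprod M (mprod M X P) X = X.
  by move=> hX; rewrite (aXP hX) (ae hX).1.
have aPXP : X = mprod M (mprod M Am A) (mctr M A) -> mprod M (mprod M P X) P = P.
  by move=> hX; rewrite mA (aXP hX) K5.
tfae.
- move=> hX; split; first exact: aXPX. split; first exact: aPXP.
  by split; [exact: (ae hX).2 | exact: aXP].
- case=> b1 [b2 [b3 b4]].
  have hX : X = mprod M (mprod M Am A) (mctr M A) by apply: ea; rewrite -b4.
  by split=> //; split=> //; split; [exact: aPX|].
- by case=> c1 [c2 [c3 c4]].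
- case=> d1 [d2 d3]; split; first by rewrite -d3.
  by rewrite -{1}H1r -K1 !mA d2 K4.
- move=> hX; exact: ea.
Qed.
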